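(* Let $d\ge3$, $h\ge1$, and let $\ell$ be a leaf (a vertex at distance $h$ from the root). Then the exponent of $G(d,h)$ equals the order of $\bar{\mathbf{x}}_\ell$ in $G(d,h)$.
   Context: Let $\mathcal{T}(d,h)$ be the rooted tree in which the root $0$ has $d$ children, every vertex at distance $1,\dots,h-1$ from the root has $d-1$ children, and the vertices at distance $h$ are leaves. Let $V$ be its vertex set, $A$ its adjacency matrix, $\Delta := dI-A$, and $\Lambda\subset\mathbb{Z}^V$ the lattice spanned by the rows of $\Delta$. Then $G(d,h):=\mathbb{Z}^V/\Lambda$; $\{\mathbf{x}_i:i\in V\}$ is the standard basis of $\mathbb{Z}^V$ and $\bar{\mathbf{v}}$ denotes the image of $\mathbf{v}$ in $G(d,h)$. The exponent is the least common multiple of the orders of the elements. *)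

(* Defs.v *)
From HB Require Import structures.
From mathcomp Require Import all_boot all_order all_algebra.
From Stdlib Require Import ClassicalEpsilon.
Set Implicit Arguments. Unset Strict Implicit. Unset Printing Implicit Defensive.
Import Order.TTheory GRing.Theory Num.Theory.
Local Open Scope ring_scope.

(* A vertex of T(d,h) is encoded by its depth k <= h and its path from the root:
   a function f : 'I_h -> 'I_d, where f i (i < k) is the index of the child taken
   at step i (f 0 < d at the root, f i < d-1 for 0 < i < k), and f i = 0 for i >= k. *)
Definition vert_ok (d h : nat) (x : 'I_h.+1 * {ffun 'I_h -> 'I_d}) : bool :=
  [forall i : 'I_h,
     if (i < x.1)%N then ((0 < i)%N ==> (x.2 i < d.-1)%N)
     else (x.2 i == 0 :> nat)].

Definition tvert (d h : nat) := {x : 'I_h.+1 * {ffun 'I_h -> 'I_d} | @vert_ok d h x}.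

Definition depth d h (u : tvert d h) : nat := (val u).1.
Definition tpath d h (u : tvert d h) : {ffun 'I_h -> 'I_d} := (val u).2.

Definition parent d h (u w : tvert d h) : bool :=
  (depth w == (depth u).+1)%N &&
  [forall i : 'I_h, (i != depth u :> nat) ==> (tpath w i == tpath u i)].

Definition adj d h (u w : tvert d h) : bool := parent u w || parent w u.

Definition Delta d h (u w : tvert d h) : int :=
  (if u == w then (d%:Z) else 0) - (if adj u w then 1 else 0).

Definition inLambda d h (v : tvert d h -> int) : Prop :=
  exists c : tvert d h -> int, forall j, v j = \sum_i c i * Delta i j.

Definition xbasis d h (i : tvert d h) : tvert d h -> int :=
  fun j => if j == i then 1 else 0.

(* n * vbar = 0 in G(d,h) = Z^V / Lambda *)
Definition kills d h (n : nat) (v : tvert d h -> int) : Prop :=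
  inLambda (fun j => n%:Z * v j).

Definition is_order d h (v : tvert d h -> int) (n : nat) : Prop :=
  (0 < n)%N /\ kills n v /\ (forall m : nat, (0 < m)%N -> kills m v -> (n <= m)%N).

(* the gorder of vbar (0 if infinite) *)
Definition gorder d h (v : tvert d h -> int) : nat :=
  match excluded_middle_informative (exists n, is_order v n) with
  | left H => proj1_sig (constructive_indefinite_description _ H)
  | right _ => 0%N
  end.

Definition is_lcm_of (S : nat -> Prop) (e : nat) : Prop :=
  (forall o, S o -> (o %| e)%N) /\
  (forall m, (forall o, S o -> (o %| m)%N) -> (e %| m)%N).

Definition is_exponent (d h : nat) (e : nat) : Prop :=
  is_lcm_of (fun o => exists v : tvert d h -> int, o = gorder v) e.

(* Main.v *)
Require Import Defs.
From mathcomp Require Import all_boot all_order all_algebra.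
From mathcomp Require Import ring zify.
From Stdlib Require Import ClassicalEpsilon.
Set Implicit Arguments. Unset Strict Implicit. Unset Printing Implicit Defensive.
Import Order.TTheory GRing.Theory Num.Theory.

Section Lat.
Local Open Scope ring_scope.
Variables d h : nat.
Local Notation V := (tvert d h).

Lemma inL_ext (v w : V -> int) : (forall j, v j = w j) -> inLambda v -> inLambda w.
Proof. by move=> E [c Hc]; exists c => j; rewrite -E Hc. Qed.

Lemma inL_lin (I : Type) (r : seq I) (P : pred I) (a : I -> int) (f : I -> V -> int) :
  (forall i, P i -> inLambda (f i)) ->
  inLambda (fun j => \sum_(i <- r | P i) a i * f i j).
Proof.
move=> H; elim: r => [|x r [c Hc]].
  by exists (fun _ => 0) => j; rewrite big_nil big1 // => i _; rewrite mul0r.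
case Px: (P x).
  have [c' Hc'] := H x Px.
  exists (fun i => a x * c' i + c i) => j.
  rewrite big_cons Px Hc' Hc mulr_sumr -big_split /=; apply: eq_bigr => i _.
  by rewrite mulrDl mulrA.
by exists c => j; rewrite big_cons Px Hc.
Qed.

Lemma kills_ext n (v w : V -> int) : (forall j, v j = w j) -> kills n v -> kills n w.
Proof. by move=> E; apply: inL_ext => j; rewrite E. Qed.

Lemma kills_lin n (I : Type) (r : seq I) (P : pred I) (a : I -> int) (f : I -> V -> int) :
  (forall i, P i -> kills n (f i)) ->
  kills n (fun j => \sum_(i <- r | P i) a i * f i j).
Proof.
move=> H; have := inL_lin r a H; apply: inL_ext => j.
by rewrite mulr_sumr; apply: eq_bigr => i _; rewrite mulrCA.
Qed.

Lemma kills_add n (v w : V -> int) (a b : int) : kills n v -> kills n w ->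
  kills n (fun j => a * v j + b * w j).
Proof.
move=> Hv Hw.
have := @kills_lin n _ [:: true; false] predT (fun i : bool => if i then a else b)
   (fun i : bool => if i then v else w).
have H : forall i : bool, predT i -> kills n (if i then v else w) by case.
move=> /(_ H).
by apply: kills_ext => j; rewrite !big_cons big_nil addr0.
Qed.

Lemma kills_sub (a b : nat) (v : V -> int) : (b <= a)%N -> kills a v -> kills b v -> kills (a - b)%N v.
Proof.
move=> ba [c Hc] [c' Hc']; exists (fun i => c i - c' i) => j.
rewrite /=.
rewrite -(subzn ba) mulrBl Hc Hc' -sumrB; apply: eq_bigr => i _; by rewrite mulrBl.
Qed.

Lemma kills_mul (n k : nat) (v : V -> int) : kills n v -> kills (k * n)%N v.
Proof.
move=> [c Hc]; exists (fun i => k%:Z * c i) => j.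
rewrite PoszM -mulrA Hc mulr_sumr; apply: eq_bigr => i _; by rewrite mulrA.
Qed.

Lemma is_order_uniq (v : V -> int) a b : is_order v a -> is_order v b -> a = b.
Proof.
move=> [a0 [ka ma]] [b0 [kb mb]]; apply/eqP; rewrite eqn_leq ma // mb //.
Qed.

Lemma gorderE (v : V -> int) n : is_order v n -> gorder v = n.
Proof.
move=> Hn; rewrite /gorder; case: excluded_middle_informative => [H|[]]; last by exists n.
by case: (constructive_indefinite_description _ H) => m Hm /=; apply: is_order_uniq Hm Hn.
Qed.

Lemma gorder_pos (v : V -> int) : (0 < gorder v)%N -> is_order v (gorder v).
Proof.
rewrite /gorder; case: excluded_middle_informative => [H|//] _.
by case: (constructive_indefinite_description _ H).
Qed.

Definition bkills (v : V -> int) k : bool :=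
  if excluded_middle_informative (kills k v) then true else false.

Lemma bkillsP v k : bkills v k = true <-> kills k v.
Proof. by rewrite /bkills; case: excluded_middle_informative. Qed.

Lemma exists_order (v : V -> int) m : (0 < m)%N -> kills m v -> exists n, is_order v n.
Proof.
move=> m0 km.
have ex : exists k, (0 < k)%N && bkills v k by exists m; rewrite m0; apply/bkillsP.
case: (ex_minnP ex) => n /andP[n0 /bkillsP kn] mn.
exists n; split=> //; split=> // k k0 kk; apply: mn; rewrite k0 /=; exact/bkillsP.
Qed.

Lemma order_dvd (v : V -> int) n m : is_order v n -> (0 < m)%N -> kills m v -> (n %| m)%N.
Proof.
move=> [n0 [kn mn]] m0 km.
have k1 : kills (m %/ n * n) v by apply: kills_mul.
have k2 : kills (m %% n) v.
  have -> : (m %% n = m - m %/ n * n)%N by rewrite {2}(divn_eq m n) addKn.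
  apply: kills_sub => //; by rewrite leq_trunc_div.
rewrite /dvdn; apply/negPn/negP => ne.
have := mn (m %% n)%N; rewrite lt0n ne => /(_ isT k2).
by rewrite leqNgt ltn_mod n0.
Qed.

End Lat.

Section Tree.
Variables d h : nat.
Hypothesis hd : (3 <= d)%N.
Local Notation V := (tvert d h).

Lemma depth_le (u : V) : (depth u <= h)%N.
Proof. by rewrite /depth -ltnS ltn_ord. Qed.

Lemma tpath0 (u : V) (i : 'I_h) : (depth u <= i)%N -> tpath u i = 0 :> nat.
Proof.
move=> hi; have /forallP/(_ i) := valP u; rewrite /depth /tpath in hi *.
by rewrite ltnNge hi /= => /eqP.
Qed.

Lemma tpath_lt (u : V) (i : 'I_h) : (i < depth u)%N -> (0 < i)%N -> (tpath u i < d.-1)%N.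
Proof.
move=> hi i0; have /forallP/(_ i) := valP u; rewrite /depth /tpath in hi *.
by rewrite hi i0.
Qed.

Lemma val_eq (u w : V) : depth u = depth w -> (forall i, tpath u i = tpath w i) -> u = w.
Proof.
case: u => [[a f] Hu]; case: w => [[b g] Hw]; rewrite /depth /tpath /= => Hd Hp.
apply: val_inj => /=; congr pair; first exact: val_inj.
by apply/ffunP => i; rewrite Hp.
Qed.

Lemma parent_uniq (j w u : V) : parent j u -> parent w u -> j = w.
Proof.
move=> /andP[/eqP dj /forallP pj] /andP[/eqP dw /forallP pw].
have dd : depth j = depth w by apply/eqP; rewrite -eqSS -dj -dw.
apply: val_eq => // i.
case: (eqVneq (i : nat) (depth j)) => [e|ne].
  by apply: val_inj; rewrite /= !tpath0 // -?dd e.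
have := implyP (pj i) ne; have := implyP (pw i); rewrite -dd => /(_ ne) /eqP <- /eqP -> //.
Qed.

Lemma child_exists (w : V) : (depth w < h)%N -> exists u : V, parent w u.
Proof.
move=> hw.
have ok : @vert_ok d h (@Ordinal h.+1 (depth w).+1 hw, tpath w).
  apply/forallP => i /=; rewrite ltnS leq_eqVlt.
  case: (eqVneq (i : nat) (depth w)) => [e|ne] /=.
    apply/implyP => _; rewrite tpath0 ?e //; by case: d hd => [|[|[|]]].
  have /forallP/(_ i) := valP w; rewrite /depth /tpath /=.
  case: ifP => //; rewrite ltn_neqAle ne /= => ->.
exists (exist (@vert_ok d h) _ ok); rewrite /parent /depth /tpath /= eqxx /=.
by apply/forallP => i; apply/implyP.
Qed.

End Tree.

Definition swap d (x y a : 'I_d) : 'I_d := if a == x then y else if a == y then x else a.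

Lemma swapK d (x y : 'I_d) : cancel (swap x y) (swap x y).
Proof.
move=> a; rewrite /swap.
case: (eqVneq a x) => [->|ax]; first by rewrite eqxx; case: (eqVneq y x) => [->|] //; rewrite eqxx.
case: (eqVneq a y) => [->|ay]; first by rewrite eqxx.
by rewrite ?(negbTE ax) ?(negbTE ay).
Qed.

Lemma swap_lt d (x y a : 'I_d) m : (x < m)%N -> (y < m)%N -> (a < m)%N -> (swap x y a < m)%N.
Proof. by move=> hx hy ha; rewrite /swap; case: ifP => _ //; case: ifP. Qed.

Section Sym.
Variables d h : nat.
Local Notation V := (tvert d h).
Variables l l' : V.
Hypothesis hl : depth l = h.
Hypothesis hl' : depth l' = h.

Definition phif (u : V) : {ffun 'I_h -> 'I_d} :=
  [ffun i : 'I_h => if (i < depth u)%N then swap (tpath l i) (tpath l' i) (tpath u i) else tpath u i].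

Lemma phi_ok (u : V) : @vert_ok d h ((val u).1, phif u).
Proof.
apply/forallP => i /=; have /forallP/(_ i) := valP u.
rewrite /phif ffunE /depth /tpath /=; case: ifP => // hi /implyP H; apply/implyP => i0.
apply: swap_lt; last exact: H.
  apply: tpath_lt => //; by rewrite hl.
apply: tpath_lt => //; by rewrite hl'.
Qed.

Definition phi (u : V) : V := exist (@vert_ok d h) _ (phi_ok u).

Lemma depth_phi u : depth (phi u) = depth u. Proof. by []. Qed.
Lemma tpath_phi u i : tpath (phi u) i =
  if (i < depth u)%N then swap (tpath l i) (tpath l' i) (tpath u i) else tpath u i.
Proof. by rewrite /tpath /= ffunE. Qed.

Lemma phiK : cancel phi phi.
Proof.
move=> u; apply: val_eq => // i; rewrite !tpath_phi depth_phi.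
by case: ltnP => _; rewrite ?swapK.
Qed.

Lemma phi_inj : injective phi. Proof. exact: can_inj phiK. Qed.

Lemma parent_phi u w : parent (phi u) (phi w) = parent u w.
Proof.
rewrite /parent !depth_phi; case: eqP => //= Hw; apply: eq_forallb => i.
rewrite !tpath_phi Hw.
case: (ltnP i (depth u)) => hi.
  by rewrite ltnS (ltnW hi) (can_eq (swapK _ _)).
case: (eqVneq (i : nat) (depth u)) => [->|ne] //=.
have -> : (i < (depth u).+1)%N = false by move: ne hi; rewrite ltnS; lia.
by [].
Qed.

Lemma Delta_phi u w : Delta (phi u) (phi w) = Delta u w.
Proof. by rewrite /Delta /adj !parent_phi (inj_eq phi_inj). Qed.

Lemma inL_phi (v : V -> int) : inLambda v -> inLambda (fun j => v (phi j)).
Proof.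
move=> [c Hc]; exists (fun i => c (phi i)) => j.
rewrite Hc (reindex_inj phi_inj) /=; apply: eq_bigr => i _; by rewrite Delta_phi.
Qed.

Lemma phi_l : phi l = l'.
Proof.
apply: val_eq => [|i]; first by rewrite depth_phi hl hl'.
by rewrite tpath_phi hl ltn_ord /swap eqxx.
Qed.

Lemma kills_leaf n : kills n (xbasis l) -> kills n (xbasis l').
Proof.
move/inL_phi; apply: inL_ext => j.
by rewrite /xbasis -phi_l -(inj_eq phi_inj) phiK.
Qed.

End Sym.

Section Main.
Local Open Scope ring_scope.
Variables d h : nat.
Hypothesis hd : (3 <= d)%N.
Local Notation V := (tvert d h).
Variable n : nat.
Hypothesis Hleaf : forall l : V, depth l = h -> kills n (xbasis l).

Lemma row_kills (u : V) : kills n (fun j => Delta u j).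
Proof.
exists (fun i => n%:Z * xbasis u i) => j.
rewrite (bigD1 u) //= big1 ?addr0; first by rewrite /xbasis eqxx mulr1.
by move=> i /negbTE ne; rewrite /xbasis ne mulr0 mul0r.
Qed.

Lemma key (w u : V) : parent w u -> kills n (xbasis u) ->
  (forall i, parent u i -> kills n (xbasis i)) -> kills n (xbasis w).
Proof.
move=> pwu ku kc.
have ks : kills n (fun j => \sum_(i <- index_enum V | adj u i && (i != w)) 1 * xbasis i j).
  apply: kills_lin => i /andP[/orP[pui|piu] ne]; first exact: kc.
  by rewrite (parent_uniq piu pwu) eqxx in ne.
have k1 := kills_add (d%:Z) (-1) ku (row_kills u).
have k2 := kills_add 1 (-1) k1 ks.
apply: kills_ext k2 => j /=.
have -> : \sum_(i <- index_enum V | adj u i && (i != w)) 1 * xbasis i j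
          = if adj u j && (j != w) then 1 else 0.
  case: ifP => Pj.
    rewrite (bigD1 j) //= big1 ?addr0 /xbasis ?eqxx ?mulr1 // => i /andP[_ ne].
    by rewrite eq_sym (negbTE ne) mulr0.
  rewrite big1 // => i Pi; rewrite /xbasis; case: eqP => [e|_]; last by rewrite mulr0.
  by rewrite -e Pj in Pi.
have adw : adj u w by rewrite /adj pwu orbT.
have uw : (u == w) = false.
  apply/eqP => e; move: pwu; rewrite e /parent => /andP[/eqP h' _].
  by move: h'; lia.
rewrite /Delta /xbasis (eq_sym u j).
case: (eqVneq j w) => [->|ne].
  rewrite adw eq_sym uw /=; lia.
rewrite ?andbT /=.
by case: (j == u); case: (adj u j) => /=; lia.
Qed.

Lemma all_kills k : forall w : V, (h - k <= depth w)%N -> kills n (xbasis w).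
Proof.
elim: k => [|k IH] w hw.
  apply: Hleaf; apply/eqP; rewrite eqn_leq depth_le; by rewrite subn0 in hw.
case: (leqP (h - k) (depth w)) => hk; first exact: IH.
have hw' : (depth w < h)%N by lia.
have [u pu] := child_exists hd hw'.
have du : depth u = (depth w).+1 by case/andP: pu => /eqP.
apply: (key pu); first by apply: IH; lia.
move=> i pi; apply: IH; have : depth i = (depth u).+1 by case/andP: pi => /eqP.
lia.
Qed.

End Main.

Theorem lemma7p4 (d h : nat) (hd : (3 <= d)%N) (hh : (1 <= h)%N)
  (l : tvert d h) (hl : depth l = h) :
  is_exponent d h (gorder (xbasis l)).
Proof.
case: (posnP (gorder (xbasis l))) => [e0|epos].
  split; first by move=> o _; rewrite e0 dvdn0.
  by move=> m Hm; rewrite e0; apply: Hm; exists (xbasis l); rewrite e0.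
set e := gorder (xbasis l) in epos *.
have [_ [ke _]] := gorder_pos epos.
have kleaf : forall l' : tvert d h, depth l' = h -> kills e (xbasis l').
  by move=> l' hl'; apply: (kills_leaf hl hl').
have kall : forall v : tvert d h -> int, kills e v.
  move=> v; have := @kills_lin d h e _ (index_enum (tvert d h)) predT v (@xbasis d h)
    (fun w _ => all_kills hd kleaf (k := h) (w := w) (ltac:(by rewrite subnn))).
  apply: kills_ext => j.
  rewrite (bigD1 j) //= big1 ?addr0 /xbasis ?eqxx ?mulr1 // => i /negbTE ne.
  by rewrite eq_sym ne mulr0.
split.
  move=> o [v ->].
  have [m Hm] := exists_order epos (kall v).
  by rewrite (gorderE Hm); apply: order_dvd Hm epos (kall v).
by move=> m Hm; apply: Hm; exists (xbasis l).
Qed.
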